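(* Let $n\ge 2$ be an integer and $A\subseteq L_n$. The following are equivalent: (i) $(X_n,\tau(A))$ is hereditarily Lindelöf; (ii) $|L_n\setminus A|\le\aleph_0$; (iii) $(X_n,\tau(A))$ is second-countable; (iv) $(X_n,\tau(A))$ is metrizable.
   Context: For $\overline{x},\overline{a}\in\mathbb R^n$ let $|\overline{x}-\overline{a}|$ be the Euclidean distance and $B(\overline{a},\epsilon)=\{\overline{x}\in\mathbb R^n:|\overline{x}-\overline{a}|<\epsilon\}$. Let $P_n=\{\overline{x}\in\mathbb R^n: x_n>0\}$, $L_n=\{\overline{x}\in\mathbb R^n: x_n=0\}$, $X_n=P_n\cup L_n$. For $\overline{a}\in L_n$ and $\epsilon>0$ put $\overline{a(\epsilon)}=(a_1,\dots,a_{n-1},\epsilon)$ and $\tilde B(\overline{a},\epsilon)=\{\overline{a}\}\cup B(\overline{a(\epsilon)},\epsilon)$. For $A\subseteq L_n$, the topology $\tau(A)$ on $X_n$ is generated by the local bases: at $\overline{a}\in P_n$, the sets $B(\overline{a},\epsilon)$ with $0<\epsilon<a_n$; at $\overline{a}\in A$, the sets $B(\overline{a},\epsilon)\cap X_n$ with $\epsilon>0$; at $\overline{a}\in L_n\setminus A$, the sets $\tilde B(\overline{a},\epsilon)$ with $\epsilon>0$. *)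

(* Defs.v *)
From mathcomp Require Import all_boot all_order all_algebra.
From mathcomp Require Import boolp classical_sets cardinality reals.
Set Implicit Arguments. Unset Strict Implicit. Unset Printing Implicit Defensive.
Import Order.TTheory GRing.Theory Num.Theory.
Local Open Scope ring_scope.
Local Open Scope classical_set_scope.

(* Points of R^n are row vectors 'rV[R]_n; coordinates x_1..x_n are x 0 i. *)
Section Defs.
Variable R : realType.
Variable n : nat.
Notation pt := 'rV[R]_n.

(* the last coordinate x_n (0 when n = 0, irrelevant since n >= 2) *)
Definition lastc : pt -> R :=
  match n as m return 'rV[R]_m -> R with
  | 0 => fun _ => 0
  | m.+1 => fun x => x 0 ord_max
  end.

Definition edist (x a : pt) : R := Num.sqrt (\sum_(i < n) (x 0 i - a 0 i) ^+ 2).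

Definition ball (a : pt) (e : R) : set pt := [set x | edist x a < e].

Definition Pn : set pt := [set x | 0 < lastc x].
Definition Ln : set pt := [set x | lastc x = 0].
Definition Xn : set pt := Pn `|` Ln.

Definition shift_up (a : pt) (e : R) : pt :=
  \row_(i < n) (if val i == n.-1 then e else a 0 i).

Definition tball (a : pt) (e : R) : set pt := [set a] `|` ball (shift_up a e) e.

Definition basic_nbhd (A : set pt) (a : pt) (U : set pt) : Prop :=
  [/\ Pn a -> exists2 e, 0 < e < lastc a & U = ball a e,
      A a -> exists2 e, 0 < e & U = ball a e `&` Xn
    & (Ln `\` A) a -> exists2 e, 0 < e & U = tball a e].

Definition tau_open (A : set pt) (U : set pt) : Prop :=
  U `<=` Xn /\ forall a, U a -> exists2 V, basic_nbhd A a V & V `<=` U.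

Definition hered_lindelof (A : set pt) : Prop :=
  forall Y : set pt, Y `<=` Xn ->
  forall F : set (set pt),
    (forall W, F W -> exists2 V, tau_open A V & W = V `&` Y) ->
    Y `<=` \bigcup_(W in F) W ->
    exists2 G : set (set pt), G `<=` F &
      countable G /\ Y `<=` \bigcup_(W in G) W.

Definition second_countable_tau (A : set pt) : Prop :=
  exists2 B : set (set pt), countable B &
    (forall V, B V -> tau_open A V) /\
    (forall U, tau_open A U -> U = \bigcup_(V in [set V | B V /\ V `<=` U]) V).

Definition is_metric_on (X : set pt) (d : pt -> pt -> R) : Prop :=
  [/\ forall x y, X x -> X y -> 0 <= d x y,
      forall x y, X x -> X y -> (d x y = 0 <-> x = y),
      forall x y, X x -> X y -> d x y = d y x
    & forall x y z, X x -> X y -> X z -> d x z <= d x y + d y z].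

Definition metric_open (X : set pt) (d : pt -> pt -> R) (U : set pt) : Prop :=
  U `<=` X /\ forall x, U x ->
    exists2 e, 0 < e & [set y | X y /\ d x y < e] `<=` U.

Definition metrizable_tau (A : set pt) : Prop :=
  exists d : pt -> pt -> R, is_metric_on Xn d /\
    forall U, tau_open A U <-> metric_open Xn d U.

End Defs.

(* Main.v *)
Require Import Defs.
From mathcomp Require Import all_boot all_order all_algebra.
From mathcomp Require Import boolp classical_sets cardinality reals.
From mathcomp Require Import ring lra.
Set Implicit Arguments. Unset Strict Implicit. Unset Printing Implicit Defensive.
Import Order.TTheory GRing.Theory Num.Theory.
Local Open Scope ring_scope.
Local Open Scope classical_set_scope.

Section Basics.
Variable R : realType.
Variable m : nat.
Local Notation pt := 'rV[R]_m.+1.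

Definition sq (x a : pt) : R := \sum_(i < m.+1) (x 0 i - a 0 i) ^+ 2.

Lemma lastcE (x : pt) : lastc x = x 0 ord_max.
Proof. by []. Qed.

Lemma sq_ge0 (x a : pt) : 0 <= sq x a.
Proof. by apply: sumr_ge0 => i _; rewrite sqr_ge0. Qed.

Lemma sqC (x a : pt) : sq x a = sq a x.
Proof. by apply: eq_bigr => i _; rewrite -sqrrN opprB. Qed.

Lemma edistE (x a : pt) : edist x a = Num.sqrt (sq x a).
Proof. by []. Qed.

Lemma edist_ge0 (x a : pt) : 0 <= edist x a.
Proof. exact: sqrtr_ge0. Qed.

Lemma edistC (x a : pt) : edist x a = edist a x.
Proof. by rewrite !edistE sqC. Qed.

Lemma edist_sqr (x a : pt) : edist x a ^+ 2 = sq x a.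
Proof. by rewrite edistE sqr_sqrtr // sq_ge0. Qed.

Lemma edist_lt (x a : pt) e : 0 < e -> (edist x a < e) = (sq x a < e ^+ 2).
Proof.
move=> e0; rewrite edistE -[X in _ < X](@ger0_norm _ e) ?ltW //.
by rewrite -sqrtr_sqr ltr_sqrt // exprn_gt0.
Qed.

Lemma edist_le (x a : pt) e : 0 <= e -> (edist x a <= e) = (sq x a <= e ^+ 2).
Proof.
move=> e0; rewrite edistE -[X in _ <= X](@ger0_norm _ e) //.
by rewrite -sqrtr_sqr ler_sqrt // sqr_ge0.
Qed.

Lemma edist_xx (x : pt) : edist x x = 0.
Proof.
rewrite edistE /sq big1 ?sqrtr0 // => i _; by rewrite subrr expr0n.
Qed.

Lemma sq_eq0 (x a : pt) : sq x a = 0 -> x = a.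
Proof.
move=> h; apply/matrixP => i j; rewrite (ord1 i); apply/eqP; rewrite -subr_eq0.
have := @psumr_eq0P _ _ xpredT (fun j => (x 0 j - a 0 j) ^+ 2) (fun j _ => sqr_ge0 _) h j isT.
by move/eqP; rewrite sqrf_eq0.
Qed.

Lemma edist_eq0 (x a : pt) : edist x a = 0 -> x = a.
Proof. by move=> h; apply: sq_eq0; rewrite -edist_sqr h expr0n. Qed.

Lemma coord_sq (x a : pt) i : (x 0 i - a 0 i) ^+ 2 <= sq x a.
Proof.
rewrite /sq (bigD1 i) //= lerDl; apply: sumr_ge0 => j _; exact: sqr_ge0.
Qed.

Lemma coord_le (x a : pt) i : `|x 0 i - a 0 i| <= edist x a.
Proof.
rewrite edistE -sqrtr_sqr ler_sqrt ?coord_sq //; last exact: sq_ge0.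
Qed.

Lemma last_le (x a : pt) : `|lastc x - lastc a| <= edist x a.
Proof. exact: coord_le. Qed.

Lemma cauchy_schwarz (u v : 'I_m.+1 -> R) :
  (\sum_i u i * v i) ^+ 2 <= (\sum_i u i ^+ 2) * (\sum_i v i ^+ 2).
Proof.
set A := \sum_i u i ^+ 2; set B := \sum_i v i ^+ 2; set S := \sum_i u i * v i.
have A0 : 0 <= A by apply: sumr_ge0 => i _; exact: sqr_ge0.
have B0 : 0 <= B by apply: sumr_ge0 => i _; exact: sqr_ge0.
have key t : 0 <= t ^+ 2 * A + 2 * t * S + B.
  have -> : t ^+ 2 * A + 2 * t * S + B = \sum_i (t * u i + v i) ^+ 2.
    rewrite /A /S /B mulr_sumr mulr_sumr -!big_split /=.
    by apply: eq_bigr => i _; ring.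
  by apply: sumr_ge0 => i _; exact: sqr_ge0.
have [A00|Ap] := eqVneq A 0.
  have u0 i : u i = 0.
    by apply/eqP; rewrite -sqrf_eq0; apply/eqP; apply: (psumr_eq0P (P:=xpredT) (fun j _ => sqr_ge0 (u j)) A00).
  rewrite /S big1 ?expr0n ?mulr_ge0 // => i _; by rewrite u0 mul0r.
have Ap' : 0 < A by rewrite lt_def Ap A0.
have := key (- S / A).
have -> : (- S / A) ^+ 2 * A + 2 * (- S / A) * S + B = B - S ^+ 2 / A.
  by field; rewrite Ap.
rewrite subr_ge0 ler_pdivrMr // => h; by rewrite mulrC.
Qed.

Lemma edist_triangle (x y z : pt) : edist x z <= edist x y + edist y z.
Proof.
rewrite edist_le ?addr_ge0 ?edist_ge0 //.
set a := edist x y; set b := edist y z.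
have ha : a ^+ 2 = \sum_i (x 0 i - y 0 i) ^+ 2 by rewrite /a edist_sqr.
have hb : b ^+ 2 = \sum_i (y 0 i - z 0 i) ^+ 2 by rewrite /b edist_sqr.
have -> : sq x z = a ^+ 2 + 2 * \sum_i ((x 0 i - y 0 i) * (y 0 i - z 0 i)) + b ^+ 2.
  rewrite ha hb mulr_sumr -!big_split /=; apply: eq_bigr => i _; ring.
have cs := cauchy_schwarz (fun i => x 0 i - y 0 i) (fun i => y 0 i - z 0 i).
rewrite /= -ha -hb -exprMn in cs.
have a0 : 0 <= a by exact: edist_ge0.
have b0 : 0 <= b by exact: edist_ge0.
have : \sum_i (x 0 i - y 0 i) * (y 0 i - z 0 i) <= a * b.
  move: cs; set S := \sum_i _ => cs; have : `|S| <= a * b.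
    by rewrite -ler_sqr ?nnegrE ?mulr_ge0 // real_normK ?num_real.
  by move=> h; apply: le_trans h; exact: ler_norm.
move=> h; nra.
Qed.

End Basics.

Section Geo.
Variable R : realType.
Variable m : nat.
Local Notation pt := 'rV[R]_m.+1.

Lemma shift_last (c : pt) s : lastc (shift_up c s) = s.
Proof. by rewrite lastcE mxE /= eqxx. Qed.

Lemma sq_shift (c y : pt) s : lastc c = 0 ->
  sq y (shift_up c s) = sq y c - 2 * s * lastc y + s ^+ 2.
Proof.
move=> c0; rewrite /sq !big_ord_recr /=.
have -> : \sum_(i < m) (y 0 (widen_ord (leqnSn m) i) - shift_up c s 0 (widen_ord (leqnSn m) i)) ^+ 2
  = \sum_(i < m) (y 0 (widen_ord (leqnSn m) i) - c 0 (widen_ord (leqnSn m) i)) ^+ 2.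
  apply: eq_bigr => i _; rewrite mxE /=.
  by have := ltn_ord i; case: eqP => // ->; rewrite ltnn.
rewrite mxE /= eqxx; rewrite lastcE in c0; rewrite c0 /lastc; ring.
Qed.

Lemma tangentP (c y : pt) s : 0 < s -> lastc c = 0 ->
  ball (shift_up c s) s y <-> sq y c < 2 * s * lastc y.
Proof.
move=> s0 c0; rewrite /ball /= edist_lt // sq_shift //.
rewrite -!lastcE; split => h; lra.
Qed.

Lemma tangent_pos (c y : pt) s : 0 < s -> lastc c = 0 ->
  ball (shift_up c s) s y -> 0 < lastc y /\ lastc y < 2 * s.
Proof.
move=> s0 c0 hb; have := hb; move/(@tangentP c y s s0 c0) => h.
have := sq_ge0 y c => h0.
split; first by nra.
have := last_le y (shift_up c s); rewrite shift_last => h1.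
have h2 : edist y (shift_up c s) < s by exact: hb.
have := ler_norm (lastc y - s); lra.
Qed.

Lemma tangent_sq (c y : pt) s : 0 < s -> lastc c = 0 ->
  ball (shift_up c s) s y -> sq y c < 4 * s ^+ 2.
Proof.
move=> s0 c0 hb; have [h1 h2] := tangent_pos s0 c0 hb.
have := (@tangentP c y s s0 c0).1 hb; nra.
Qed.

Lemma tangent_mono (c y : pt) s t : 0 < s -> s <= t -> lastc c = 0 ->
  ball (shift_up c s) s y -> ball (shift_up c t) t y.
Proof.
move=> s0 st c0 hb; have t0 : 0 < t by lra.
have [h1 _] := tangent_pos s0 c0 hb.
apply/(@tangentP c y t t0 c0); have := (@tangentP c y s s0 c0).1 hb; nra.
Qed.

End Geo.

Section Top.
Variable R : realType.
Variable m : nat.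
Local Notation pt := 'rV[R]_m.+1.
Local Notation P := (@Pn R m.+1).
Local Notation L := (@Ln R m.+1).
Local Notation X := (@Xn R m.+1).
Variable A : set pt.
Hypothesis AL : A `<=` L.

Lemma PnE (x : pt) : P x = (0 < lastc x). Proof. by []. Qed.
Lemma LnE (x : pt) : L x = (lastc x = 0). Proof. by []. Qed.

Lemma PnotL (x : pt) : P x -> ~ L x.
Proof. by rewrite PnE LnE => h h'; rewrite h' ltxx in h. Qed.

Lemma Xcases (x : pt) : X x -> [\/ P x, A x | (L `\` A) x].
Proof.
case=> [Px|Lx]; first by apply: Or31.
by case: (pselect (A x)) => Ax; [apply: Or32 | apply: Or33].
Qed.

Lemma basic_P (y : pt) d : P y -> 0 < d < lastc y -> basic_nbhd A y (ball y d).
Proof.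
move=> Py hd; split.
- by move=> _; exists d.
- by move=> /AL /(PnotL Py).
- by move=> [/(PnotL Py)].
Qed.

Lemma basic_A (a : pt) e : A a -> 0 < e -> basic_nbhd A a (ball a e `&` X).
Proof.
move=> Aa e0; split.
- by move=> /PnotL; move: (AL Aa).
- by move=> _; exists e.
- by move=> [_ ].
Qed.

Lemma basic_C (c : pt) e : (L `\` A) c -> 0 < e -> basic_nbhd A c (tball c e).
Proof.
move=> [Lc nAc] e0; split.
- by move=> /PnotL.
- by [].
- by move=> _; exists e.
Qed.

Lemma tball_P (c : pt) e y : L c -> 0 < e -> ball (shift_up c e) e y -> P y.
Proof. by move=> Lc e0 hb; have [] := tangent_pos e0 Lc hb. Qed.

Lemma tballX (c : pt) e : L c -> 0 < e -> tball c e `<=` X.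
Proof.
move=> Lc e0 y [->|hb]; first by right.
by left; apply: tball_P hb.
Qed.

Lemma ball_sub (x y : pt) r d : edist y x + d <= r -> ball y d `<=` ball x r.
Proof.
move=> h z; rewrite /ball /= => hz.
have := edist_triangle z y x; lra.
Qed.

Lemma ball_in_P (x : pt) r : r <= lastc x -> ball x r `<=` P.
Proof.
move=> h z hz; rewrite PnE.
have := last_le z x; have : edist z x < r by exact: hz.
move=> h1 h2; have := ler_norm (lastc x - lastc z); rewrite distrC; lra.
Qed.

Lemma tball_open (c : pt) e : (L `\` A) c -> 0 < e -> tau_open A (tball c e).
Proof.
move=> Cc e0; have Lc : L c by case: Cc.
split; first exact: tballX.
move=> y [->|hb]; first by exists (tball c e) => //; exact: basic_C.
have Py := tball_P Lc e0 hb.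
set d := Num.min (e - edist y (shift_up c e)) (lastc y / 2).
have hd1 : d <= e - edist y (shift_up c e) by rewrite /d ge_min lexx.
have hd2 : d <= lastc y / 2 by rewrite /d ge_min lexx orbT.
have hb' : edist y (shift_up c e) < e by exact: hb.
have d0 : 0 < d.
  rewrite /d lt_min; apply/andP; split; first by rewrite subr_gt0.
  rewrite PnE in Py; lra.
exists (ball y d).
  apply: basic_P => //; apply/andP; split => //; rewrite PnE in Py; lra.
move=> z hz; right; have hs : edist y (shift_up c e) + d <= e by lra.
exact: (ball_sub hs hz).
Qed.

Lemma tball_L (c : pt) e y : L c -> 0 < e -> tball c e y -> L y -> y = c.
Proof. by move=> Lc e0 [//|hb] /(PnotL (tball_P Lc e0 hb)). Qed.

Lemma basic_has_ball (x : pt) V : X x -> basic_nbhd A x V ->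
  exists p r, 0 < r /\ ball p r `<=` V.
Proof.
move=> Xx [hP hA hC]; case: (Xcases Xx) => [Px|Ax|Cx].
- have [e /andP[e0 _] ->] := hP Px; by exists x, e; split.
- have [e e0 ->] := hA Ax; have Lx := AL Ax.
  have e20 : 0 < e / 2 by lra.
  exists (shift_up x (e / 2)), (e / 2); split => // y hy; split; last first.
    by left; apply: tball_P hy.
  have [h1 h2] := tangent_pos e20 Lx hy.
  have := tangent_sq e20 Lx hy => h3.
  rewrite /ball /= edist_lt //; lra.
- have [e e0 ->] := hC Cx; case: Cx => Lx _.
  by exists (shift_up x e), e; split => // y hy; right.
Qed.

End Top.

Section Lind.
Variable R : realType.
Variable m : nat.
Local Notation pt := 'rV[R]_m.+1.
Local Notation P := (@Pn R m.+1).
Local Notation L := (@Ln R m.+1).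
Local Notation X := (@Xn R m.+1).
Variable A : set pt.
Hypothesis AL : A `<=` L.

Lemma i_ii : hered_lindelof A -> countable (L `\` A).
Proof.
move=> HL; set Y := L `\` A.
have YX : Y `<=` X by move=> y [Ly _]; right.
set F := [set W | exists2 c, Y c & W = tball c 1 `&` Y].
have hF : forall W, F W -> exists2 V, tau_open A V & W = V `&` Y.
  move=> W [c Yc ->]; exists (tball c 1) => //; exact: tball_open.
have cov : Y `<=` \bigcup_(W in F) W.
  by move=> c Yc; exists (tball c 1 `&` Y); [exists c | split => //; left].
have [G GF [cG covG]] := HL Y YX F hF cov.
have inG c : Y c -> G (tball c 1 `&` Y).
  move=> Yc; have [W GW Wc] := covG c Yc.
  have [c' Yc' eW] := GF W GW; rewrite eW in Wc.
  have Lc' : L c' by case: Yc'.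
  have Lc : L c by case: Yc.
  have e : c = c' by case: Wc => Wc _; exact: (tball_L Lc' ltr01 Wc Lc).
  by rewrite e -eW.
move/countable_injP: cG => [g ginj].
apply/countable_injP; exists (fun c => g (tball c 1 `&` Y)) => c c' Yc Yc' e.
rewrite !inE in Yc Yc'.
have := ginj _ _ (mem_set (inG c Yc)) (mem_set (inG c' Yc')) e => eq.
have : (tball c' 1 `&` Y) c by rewrite -eq; split => //; left.
case=> h _; have Lc' : L c' by case: Yc'.
have Lc : L c by case: Yc.
exact: (tball_L Lc' ltr01 h Lc).
Qed.

Lemma iii_i : second_countable_tau A -> hered_lindelof A.
Proof.
move=> [B cB [BO Bbase]] Y YX F hF cov.
pose Q b W := F W /\ exists V, [/\ tau_open A V, W = V `&` Y & b `<=` V].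
set B' := [set b | B b /\ exists W, Q b W].
have ch : forall b, exists W, B' b -> Q b W.
  move=> b; case: (pselect (B' b)) => [[_ [W hW]]|nb]; first by exists W.
  by exists set0.
have [ch' hch] := choice ch.
exists (ch' @` B').
  by move=> _ [b Bb <-]; have [] := hch b Bb.
split.
  apply: sub_countable (card_image_le _ _) _.
  apply: sub_countable cB; apply: subset_card_le => b []; done.
move=> y Yy; have [W FW Wy] := cov y Yy.
have [V oV eW] := hF W FW.
have Vy : V y by rewrite eW in Wy; case: Wy.
have := Bbase V oV; move=> eV; rewrite eV in Vy.
have [b [Bb bV] by'] := Vy.
have B'b : B' b by split => //; exists W; split => //; exists V.
exists (ch' b); first by exists b.
have [_ [V' [_ -> bV']]] := hch b B'b.
by split => //; apply: bV'.
Qed.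

Lemma rat_approx (p : pt) r : 0 < r ->
  exists q : 'rV[rat]_m.+1, edist (map_mx ratr q) p < r.
Proof.
move=> r0; set N : R := m.+1%:R.
have N1 : 1 <= N by rewrite /N ler1n.
set d := r / (N + 1).
have d0 : 0 < d by rewrite /d divr_gt0 //; lra.
have ch : forall i : 'I_m.+1, exists t : rat, p 0 i - d < ratr t < p 0 i + d.
  move=> i; have hlt : p 0 i - d < p 0 i + d by lra.
  by have [t] := rat_in_itvoo hlt; rewrite in_itv /=; exists t.
have [f hf] := choice ch.
exists (\row_i f i); rewrite edist_lt //.
have : sq (map_mx ratr (\row_i f i)) p <= \sum_(i < m.+1) d ^+ 2.
  apply: ler_sum => i _; rewrite !mxE.
  have /andP[h1 h2] := hf i.
  rewrite -ler_sqrt ?sqr_ge0 // !sqrtr_sqr ler_norml (ger0_norm (ltW d0)); apply/andP; split; lra.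
rewrite sumr_const card_ord -mulr_natr -/N => h.
have e : d * (N + 1) = r by rewrite /d divfK //; lra.
apply: (le_lt_trans h); rewrite -e; nra.
Qed.

Definition Dset : set pt :=
  [set x | X x /\ exists q : 'rV[rat]_m.+1, x = map_mx ratr q].

Lemma Dset_countable : countable Dset.
Proof.
apply: (@sub_countable _ _ _ ((map_mx ratr) @` [set: 'rV[rat]_m.+1])).
  by apply: subset_card_le => x [_ [q ->]]; exists q.
apply: sub_countable (card_image_le _ _) _; exact: countableP.
Qed.

Lemma Dset_dense U x : tau_open A U -> U x -> exists q, Dset q /\ U q.
Proof.
move=> [UX hU] Ux; have [V bV VU] := hU x Ux.
have [p [r [r0 hb]]] := basic_has_ball AL (UX x Ux) bV.
have [q hq] := rat_approx p r0.
have Uq : U (map_mx ratr q) by apply/VU/hb.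
by exists (map_mx ratr q); split => //; split; [exact: UX | exists q].
Qed.

Definition mball (d : pt -> pt -> R) x r := [set y | X y /\ d x y < r].

Lemma mball_open d x r : is_metric_on X d -> X x -> metric_open X d (mball d x r).
Proof.
move=> [d0 deq dC dT] Xx; split; first by move=> y [].
move=> y [Xy hy]; exists (r - d x y); first by rewrite subr_gt0.
move=> z [Xz hz]; split => //; have := dT x y z Xx Xy Xz; lra.
Qed.

Lemma iv_iii : metrizable_tau A -> second_countable_tau A.
Proof.
move=> [d [dm hd]].
have dm' := dm; case: dm' => [d0 deq dC dT].
set B := (fun qk : pt * nat => mball d qk.1 (qk.2.+1%:R^-1)) @` (Dset `*` setT).
exists B.
  apply: sub_countable (card_image_le _ _) _.
  apply: countableX; [exact: Dset_countable | exact: countableP].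
split.
  move=> _ [[q k] [Dq _] <-]; apply/hd; apply: mball_open => //; by case: Dq.
move=> U oU; apply/seteqP; split; last by move=> y [V [_ VU] Vy]; exact: VU.
move=> x Ux; have [UX hm] := (hd U).1 oU.
have Xx := UX x Ux.
have [e e0 he] := hm x Ux.
have [k hk] := @ltr_add_invr R 0 (e / 2) ltac:(lra).
rewrite add0r in hk.
set r := k.+1%:R^-1 : R.
have r0 : 0 < r by rewrite /r invr_gt0 ltr0n.
have ob : tau_open A (mball d x r) by apply/hd; exact: mball_open.
have dxx : d x x = 0 by apply/(deq x x Xx Xx).
have mx : mball d x r x by split => //; rewrite dxx.
have [q [Dq [Xq dq]]] := Dset_dense ob mx.
have Xq' : X q by case: Dq.
exists (mball d q r).
  split; first by exists (q, k).
  move=> z [Xz hz]; apply: he; split => //.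
  have hk' : r < e / 2 := hk; have := dT x q z Xx Xq' Xz; lra.
by split => //; rewrite dC.
Qed.

End Lind.

Section Met.
Variable R : realType.
Variable m : nat.
Local Notation pt := 'rV[R]_m.+1.
Local Notation P := (@Pn R m.+1).
Local Notation L := (@Ln R m.+1).
Local Notation X := (@Xn R m.+1).
Variable A : set pt.
Hypothesis AL : A `<=` L.
Local Notation C := (L `\` A).
Variable idx : pt -> nat.
Hypothesis idx_inj : {in C &, injective idx}.

Definition w (c : pt) : R := (idx c).+1%:R^-1.
Definition g (c x : pt) : R :=
  if 0 < lastc x then sq x c / (sq x c + lastc x) else if x == c then 0 else 1.
Definition S (x y : pt) : set R :=
  [set t | t = 0 \/ exists2 c, C c & t = w c * `|g c x - g c y|].
Definition D x y := sup (S x y).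
Definition dist x y := edist x y + D x y.

Lemma w_gt0 c : 0 < w c.
Proof. by rewrite /w invr_gt0 ltr0n. Qed.

Lemma w_le1 c : w c <= 1.
Proof. by rewrite /w invf_le1 ?ltr0n // ler1n. Qed.

Lemma gP (c x : pt) : 0 < lastc x -> g c x = sq x c / (sq x c + lastc x).
Proof. by rewrite /g => ->. Qed.

Lemma gL (c x : pt) : ~ (0 < lastc x) -> g c x = if x == c then 0 else 1.
Proof. by rewrite /g => /negP/negbTE ->. Qed.

Lemma g_01 c x : 0 <= g c x <= 1.
Proof.
case: (pselect (0 < lastc x)) => h.
  rewrite gP //; have := sq_ge0 x c => h0; have hp : 0 < sq x c + lastc x by lra.
  apply/andP; split; first by rewrite divr_ge0 //; lra.
  by rewrite ler_pdivrMr // mul1r; lra.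
by rewrite gL //; case: eqP => _; rewrite ?lexx ?ler01.
Qed.

Lemma g_diff_le1 c x y : `|g c x - g c y| <= 1.
Proof.
have /andP[h1 h2] := g_01 c x; have /andP[h3 h4] := g_01 c y.
rewrite ler_norml; apply/andP; split; lra.
Qed.

Lemma S_ub x y t : S x y t -> t <= 1.
Proof.
case=> [->|[c _ ->]]; first exact: ler01.
have := w_le1 c; have := w_gt0 c; have := g_diff_le1 c x y.
have := normr_ge0 (g c x - g c y); nra.
Qed.

Lemma S_has_sup x y : has_sup (S x y).
Proof. by split; [exists 0; left | exists 1 => t; exact: S_ub]. Qed.

Lemma D_ge0 x y : 0 <= D x y.
Proof. by apply: sup_upper_bound; [exact: S_has_sup | left]. Qed.

Lemma D_ge x y c : C c -> w c * `|g c x - g c y| <= D x y.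
Proof. by move=> Cc; apply: sup_upper_bound; [exact: S_has_sup | right; exists c]. Qed.

Lemma D_le x y b : 0 <= b -> (forall c, C c -> w c * `|g c x - g c y| <= b) ->
  D x y <= b.
Proof.
move=> b0 h; apply: ge_sup; first by exists 0; left.
by move=> t [->|[c Cc ->]] //; exact: h.
Qed.

Lemma D_sym x y : D x y = D y x.
Proof.
rewrite /D /S; congr sup; apply/seteqP; split => t [->|[c Cc ->]];
  by [left | right; exists c => //; rewrite distrC].
Qed.

Lemma D_xx x : D x x = 0.
Proof.
apply/le_anti; rewrite D_ge0 andbT; apply: D_le => // c _.
by rewrite subrr normr0 mulr0.
Qed.

Lemma D_tri x y z : D x z <= D x y + D y z.
Proof.
apply: D_le; first by rewrite addr_ge0 // D_ge0.
move=> c Cc; have h1 := D_ge x y Cc; have h2 := D_ge y z Cc.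
have : `|g c x - g c z| <= `|g c x - g c y| + `|g c y - g c z|.
  by rewrite (_ : g c x - g c z = (g c x - g c y) + (g c y - g c z)) ?ler_normD //; ring.
have := w_gt0 c => hw h; have := ler_wpM2l (ltW hw) h; lra.
Qed.

Lemma dist_metric : is_metric_on X dist.
Proof.
split.
- by move=> x y _ _; rewrite /dist addr_ge0 ?edist_ge0 ?D_ge0.
- move=> x y _ _; split; last by move=> ->; rewrite /dist edist_xx D_xx addr0.
  rewrite /dist => h; have := edist_ge0 x y; have := D_ge0 x y => h1 h2.
  apply: edist_eq0; lra.
- by move=> x y _ _; rewrite /dist edistC D_sym.
- move=> x y z _ _ _; rewrite /dist; have := edist_triangle x y z; have := D_tri x y z; lra.
Qed.

Lemma finmin (a : pt) K : exists2 r0, 0 < r0 &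
  forall c, C c -> c != a -> (idx c < K)%N -> r0 <= edist a c.
Proof.
elim: K => [|K [r r0 hr]]; first by exists 1 => //.
case: (pselect (exists2 c, C c /\ c != a & idx c = K)) => [[c [Cc ca] ic]|nc].
  have ac0 : 0 < edist a c.
    rewrite lt_def edist_ge0 andbT; apply/eqP => /edist_eq0 ac.
    by rewrite ac eqxx in ca.
  exists (Num.min r (edist a c)); first by rewrite lt_min r0 ac0.
  move=> c' Cc' c'a; rewrite ltnS leq_eqVlt => /orP[/eqP e|lt].
    have -> : c' = c by apply: idx_inj; rewrite ?inE // e ic.
    by rewrite ge_min lexx orbT.
  by rewrite ge_min hr.
exists r => // c' Cc' c'a; rewrite ltnS leq_eqVlt => /orP[/eqP e|lt]; last exact: hr.
by exfalso; apply: nc; exists c'.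
Qed.

Lemma gLa (c a : pt) : L a -> c != a -> g c a = 1.
Proof.
move=> La ca; rewrite gL; last by rewrite LnE in La; rewrite La ltxx.
by rewrite eq_sym (negbTE ca).
Qed.

Lemma near_L (a : pt) e : L a -> 0 < e -> exists2 d, 0 < d &
  forall y c, X y -> edist a y < d -> C c -> c != a -> w c * `|g c a - g c y| <= e.
Proof.
move=> La e0; have [K hK] := @ltr_add_invr R 0 e e0; rewrite add0r in hK.
have [r0 r00 hr] := finmin a K.
set d := Num.min (r0 / 2) (e * r0 ^+ 2 / 4).
have d1 : d <= r0 / 2 by rewrite /d ge_min lexx.
have d2 : d <= e * r0 ^+ 2 / 4 by rewrite /d ge_min lexx orbT.
have d0 : 0 < d by rewrite /d lt_min; apply/andP; split;
  [lra | rewrite !divr_gt0 ?mulr_gt0 ?exprn_gt0 //].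
exists d => // y c Xy ay Cc ca.
have hw := w_gt0 c; have hw1 := w_le1 c.
have hn := normr_ge0 (g c a - g c y).
case: (ltnP (idx c) K) => hK'; last first.
  have : w c <= K.+1%:R^-1 by rewrite /w lef_pV2 ?posrE ?ltr0n // ler_nat.
  move=> hwK; apply: (le_trans (ler_wpM2l (ltW hw) (g_diff_le1 c a y))); rewrite mulr1; exact: (le_trans hwK (ltW hK)).
have hac := hr c Cc ca hK'.
have hyc : r0 / 2 <= edist y c.
  have := edist_triangle a y c; lra.
suff : `|g c a - g c y| <= e by nra.
rewrite gLa //.
case: (pselect (0 < lastc y)) => vy; last first.
  rewrite gL // ifN ?subrr ?normr0 ?ltW //.
  apply/eqP => yc; rewrite yc edist_xx in hyc; lra.
rewrite gP //.
have u0 : r0 ^+ 2 / 4 <= sq y c.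
  rewrite -edist_sqr; have : 0 <= r0 / 2 by lra.
  move=> h; have := ler_pM h h hyc hyc; rewrite -expr2 => h'; apply: le_trans h'; lra.
have vd : lastc y < d.
  have h := last_le y a; have La' := La; rewrite LnE in La'.
  rewrite La' subr0 ger0_norm in h; last exact: ltW.
  rewrite edistC in h; lra.
have hu := sq_ge0 y c.
have hp : 0 < sq y c + lastc y by lra.
have -> : 1 - sq y c / (sq y c + lastc y) = lastc y / (sq y c + lastc y)
  by field; apply/lt0r_neq0.
rewrite ger0_norm; last by rewrite divr_ge0 // ltW.
rewrite ler_pdivrMr //; nra.
Qed.

Lemma core_ineq (s1 s2 v1 v2 d : R) : 0 < v1 -> v1 / 2 <= v2 ->
  `|v1 - v2| <= d -> `|s1 - s2| <= d -> 0 <= s1 -> 0 <= s2 -> d <= 1 ->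
  `|s1 ^+ 2 / (s1 ^+ 2 + v1) - s2 ^+ 2 / (s2 ^+ 2 + v2)| <= d * (v1 + 6) / v1.
Proof.
move=> v10 v12 hv hs s10 s20 d1.
set u1 := s1 ^+ 2; set u2 := s2 ^+ 2.
have u10 : 0 <= u1 by exact: sqr_ge0.
have u20 : 0 <= u2 by exact: sqr_ge0.
have v20 : 0 < v2 by lra.
have p1 : 0 < u1 + v1 by lra.
have p2 : 0 < u2 + v2 by lra.
have -> : u1 / (u1 + v1) - u2 / (u2 + v2) =
  (u1 * (v2 - v1) + v1 * (u1 - u2)) / ((u1 + v1) * (u2 + v2)).
  by field; rewrite !lt0r_neq0.
have d0 : 0 <= d by have := normr_ge0 (s1 - s2); lra.
have A1 : `|u1 * (v2 - v1)| <= u1 * d.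
  by rewrite normrM ger0_norm // distrC ler_wpM2l.
have hu : `|u1 - u2| <= d * (u2 + 2).
  have -> : u1 - u2 = (s1 - s2) * (s1 + s2) by rewrite /u1 /u2; ring.
  rewrite normrM (ger0_norm (addr_ge0 s10 s20)).
  have h1 : s1 + s2 <= 2 * s2 + d.
    have := ler_norm (s1 - s2); lra.
  have h2 : 2 * s2 + d <= u2 + 2 by rewrite /u2; have := sqr_ge0 (s2 - 1); rewrite sqrrB; lra.
  apply: (le_trans (ler_wpM2r (addr_ge0 s10 s20) hs)).
  apply: ler_wpM2l => //; lra.
have A2 : `|v1 * (u1 - u2)| <= v1 * (d * (u2 + 2)).
  by rewrite normrM (ger0_norm (ltW v10)); apply: ler_wpM2l => //; exact: ltW.
rewrite normrM (ger0_norm (x := ((u1 + v1) * (u2 + v2))^-1)); last by rewrite invr_ge0 mulr_ge0 // ltW.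
rewrite ler_pdivrMr ?mulr_gt0 //.
have hN := ler_normD (u1 * (v2 - v1)) (v1 * (u1 - u2)).
apply: (le_trans hN).
rewrite (mulrC (d * (v1 + 6) / v1)) mulrA.
rewrite ler_pdivlMr //.
have key : (u1 * d + v1 * (d * (u2 + 2))) * v1 <= (u1 + v1) * (u2 + v2) * (d * (v1 + 6)).
  have e1 : u1 * v1 <= u1 * (v2 * 6) by rewrite ler_wpM2l //; lra.
  have e2 : v1 * v1 * u2 <= v1 * v1 * u2 + v1 * v2 * 6 + u1 * u2 * v1 + u1 * u2 * 6 + u1 * v2 * v1 + v1 * u2 * 6 + v1 * v2 * v1.
    have := mulr_ge0 (mulr_ge0 u10 u20) (ltW v10).
    have := mulr_ge0 u10 u20.
    have := mulr_ge0 (mulr_ge0 u10 (ltW v20)) (ltW v10).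
    have := mulr_ge0 (ltW v10) u20.
    have := mulr_ge0 (mulr_ge0 (ltW v10) (ltW v20)) (ltW v10).
    have := mulr_ge0 (ltW v10) (ltW v20).
    lra.
  have e3 : 2 * v1 * v1 <= v1 * v2 * 6 by nra.
  have E : (u1 + v1) * (u2 + v2) * (d * (v1 + 6)) = d * ((u1 + v1) * (u2 + v2) * (v1 + 6)) by ring.
  rewrite E.
  have E2 : (u1 * d + v1 * (d * (u2 + 2))) * v1 = d * (u1 * v1 + v1 * v1 * u2 + 2 * v1 * v1) by ring.
  rewrite E2; apply: ler_wpM2l => //.
  have E3 : (u1 + v1) * (u2 + v2) * (v1 + 6) = u1 * u2 * v1 + u1 * u2 * 6 + u1 * v2 * v1 + u1 * (v2 * 6) + v1 * u2 * v1 + v1 * u2 * 6 + v1 * v2 * v1 + v1 * v2 * 6 by ring.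
  rewrite E3.
  have := mulr_ge0 (mulr_ge0 u10 u20) (ltW v10).
  have := mulr_ge0 u10 u20.
  have := mulr_ge0 (mulr_ge0 u10 (ltW v20)) (ltW v10).
  have := mulr_ge0 (ltW v10) u20.
  have := mulr_ge0 (mulr_ge0 (ltW v10) (ltW v20)) (ltW v10).
  have : v1 * u2 * v1 = v1 * v1 * u2 by ring.
  lra.
have := ler_wpM2r (ltW v10) (lerD A1 A2); lra.
Qed.

Lemma near_P (x : pt) e : 0 < lastc x -> 0 < e -> exists2 d, 0 < d /\ d < lastc x &
  forall y c, edist x y < d -> `|g c x - g c y| <= e.
Proof.
move=> v0 e0; set v1 := lastc x; have v0' : 0 < v1 := v0.
set d := Num.min (Num.min 1 (v1 / 2)) (e * v1 / (v1 + 6)).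
have hd1 : d <= 1 by rewrite /d !ge_min lexx.
have hd2 : d <= v1 / 2 by rewrite /d !ge_min lexx orbT.
have hd3 : d <= e * v1 / (v1 + 6) by rewrite /d ge_min lexx orbT.
have d0 : 0 < d.
  rewrite /d !lt_min ltr01 /=; apply/andP; split; first (rewrite /v1; lra).
  by rewrite !divr_gt0 ?mulr_gt0 //; rewrite /v1; lra.
exists d; first by split => //; lra.
move=> y c hxy.
have hv : `|v1 - lastc y| <= d by have := last_le x y; lra.
have v2 : v1 / 2 <= lastc y by have := ler_norm (v1 - lastc y); lra.
have vy : 0 < lastc y by lra.
rewrite (gP c v0) (gP c vy) -!edist_sqr.
have hs : `|edist x c - edist y c| <= d.
  rewrite ler_norml; apply/andP; split.
    have := edist_triangle y x c; rewrite (edistC y x); lra.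
  have := edist_triangle x y c; lra.
have := core_ineq v0 v2 hv hs (edist_ge0 x c) (edist_ge0 y c) hd1.
move=> h; apply: (le_trans h).
rewrite ler_pdivrMr //; have : d * (v1 + 6) <= e * v1.
  by move: hd3; rewrite ler_pdivlMr //; lra.
rewrite -/v1; lra.
Qed.

Lemma dist_ge_edist x y : edist x y <= dist x y.
Proof. by rewrite /dist lerDl D_ge0. Qed.

Lemma near_Pd (x : pt) e : 0 < lastc x -> 0 < e -> exists2 d, 0 < d < lastc x &
  forall y, edist x y < d -> dist x y < e.
Proof.
move=> v0 e0; have e40 : 0 < e / 4 by lra.
have [d1 [d10 d1v] hd1] := near_P v0 e40.
exists (Num.min d1 (e / 4)).
  by rewrite lt_min d10 e40 /= gt_min d1v.
move=> y hy; have hy1 : edist x y < d1 by move: hy; rewrite lt_min => /andP[].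
have hy2 : edist x y < e / 4 by move: hy; rewrite lt_min => /andP[].
have : D x y <= e / 4.
  apply: D_le; first lra.
  move=> c _; have := hd1 y c hy1; have := w_le1 c; have := w_gt0 c.
  have := normr_ge0 (g c x - g c y); nra.
rewrite /dist; lra.
Qed.

Lemma near_A (a : pt) e : A a -> 0 < e -> exists2 d, 0 < d &
  forall y, X y -> edist a y < d -> dist a y < e.
Proof.
move=> Aa e0; have e40 : 0 < e / 4 by lra.
have [d1 d10 hd1] := near_L (AL Aa) e40.
exists (Num.min d1 (e / 4)); first by rewrite lt_min d10 e40.
move=> y Xy hy; have hy1 : edist a y < d1 by move: hy; rewrite lt_min => /andP[].
have hy2 : edist a y < e / 4 by move: hy; rewrite lt_min => /andP[].
have : D a y <= e / 4.
  apply: D_le; first lra.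
  move=> c Cc; apply: hd1 => //; apply/eqP => ca; case: Cc => _; by rewrite ca.
rewrite /dist; lra.
Qed.

Lemma near_C (c0 : pt) e : C c0 -> 0 < e -> exists2 d, 0 < d &
  forall y, tball c0 d y -> dist c0 y < e.
Proof.
move=> Cc0 e0; have e40 : 0 < e / 4 by lra.
have Lc0 : L c0 by case: Cc0.
have [d1 d10 hd1] := near_L Lc0 e40.
set d := Num.min (d1 / 2) (e / 8).
have hd1' : d <= d1 / 2 by rewrite /d ge_min lexx.
have hd2 : d <= e / 8 by rewrite /d ge_min lexx orbT.
have d0 : 0 < d by rewrite /d lt_min; apply/andP; split; lra.
exists d => // y [->|hb].
  by rewrite /dist edist_xx D_xx addr0.
have Xy : X y by left; exact: tball_P hb.
have [vy _] := tangent_pos d0 Lc0 hb.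
have hsq := tangent_sq d0 Lc0 hb.
have hsq2 := (@tangentP _ _ c0 y d d0 Lc0).1 hb.
have ed : edist c0 y < 2 * d.
  by rewrite edistC edist_lt; [lra | lra].
have : D c0 y <= e / 4.
  apply: D_le; first lra.
  move=> c Cc; case: (eqVneq c c0) => [->|cc0]; last first.
    apply: hd1 => //; lra.
  rewrite (gL c0 (x := c0)); last by rewrite LnE in Lc0; rewrite Lc0 ltxx.
  rewrite eqxx (gP _ vy) sub0r normrN.
  have hu := sq_ge0 y c0.
  have hp : 0 < sq y c0 + lastc y by lra.
  rewrite ger0_norm; last by rewrite divr_ge0 //; lra.
  have : sq y c0 / (sq y c0 + lastc y) <= 2 * d.
    rewrite ler_pdivrMr //; nra.
  have := w_le1 c0; have := w_gt0 c0; have := divr_ge0 hu (ltW hp); nra.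
rewrite /dist; lra.
Qed.

Lemma ii_iv_aux : metrizable_tau A.
Proof.
exists dist; split; first exact: dist_metric.
move=> U; split.
- move=> [UX hU]; split => // x Ux.
  have [V [hP hA hC] VU] := hU x Ux.
  case: (Xcases A (UX x Ux)) => [Px|Ax|Cx].
  + have [e /andP[e0 _] eV] := hP Px; exists e => // y [Xy dy].
    apply: VU; rewrite eV /ball /= edistC; have := dist_ge_edist x y; lra.
  + have [e e0 eV] := hA Ax; exists e => // y [Xy dy].
    apply: VU; rewrite eV; split => //; rewrite /ball /= edistC.
    have := dist_ge_edist x y; lra.
  + have [eps eps0 eV] := hC Cx; have Lx : L x by case: Cx.
    set eta := Num.min (1 / 2) eps.
    have eta0 : 0 < eta by rewrite lt_min; apply/andP; split; lra.
    have eta1 : eta <= 1 / 2 by rewrite /eta ge_min lexx.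
    have eta2 : eta <= eps by rewrite /eta ge_min lexx orbT.
    have hw := w_gt0 x.
    exists (w x * eta); first exact: mulr_gt0.
    move=> y [Xy dy]; apply: VU; rewrite eV.
    have h1 := D_ge x y Cx.
    have h2 : w x * `|g x x - g x y| < w x * eta.
      have := dist_ge_edist x y; have := edist_ge0 x y; rewrite /dist in dy *; lra.
    rewrite ltr_pM2l // in h2.
    rewrite (gL x (x := x)) in h2; last by rewrite LnE in Lx; rewrite Lx ltxx.
    rewrite eqxx sub0r normrN in h2.
    case: (eqVneq y x) => [->|yx]; first by left.
    case: (pselect (0 < lastc y)) => vy; last first.
      by rewrite gL // (negbTE yx) normr1 in h2; lra.
    right; apply/(@tangentP _ _ x y eps eps0) => //.
    rewrite gP // in h2.
    have hu := sq_ge0 y x.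
    have hp : 0 < sq y x + lastc y by lra.
    rewrite ger0_norm in h2; last by rewrite divr_ge0 //; lra.
    rewrite ltr_pdivrMr // in h2; nra.
- move=> [UX hm]; split => // x Ux.
  have [e e0 he] := hm x Ux.
  case: (Xcases A (UX x Ux)) => [Px|Ax|Cx].
  + have [d /andP[d0 dv] hd] := near_Pd Px e0.
    exists (ball x d); first by apply: basic_P => //; rewrite d0 dv.
    move=> y hy; apply: he; split.
      by left; apply: (ball_in_P (ltW dv)).
    by apply: hd; rewrite edistC.
  + have [d d0 hd] := near_A Ax e0.
    exists (ball x d `&` X); first exact: basic_A.
    move=> y [hy Xy]; apply: he; split => //; apply: hd => //; rewrite edistC; exact: hy.
  + have [d d0 hd] := near_C Cx e0.
    exists (tball x d); first exact: basic_C.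
    have Lx : L x by case: Cx.
    move=> y hy; apply: he; split; first exact: (tballX Lx d0).
    exact: hd.
Qed.

End Met.

Unset Implicit Arguments.

Theorem mainTheorem2 (R : realType) (n : nat) (A : set 'rV[R]_n) :
  (1 < n)%N -> A `<=` @Ln R n ->
  [<-> hered_lindelof A;
       countable (@Ln R n `\` A);
       second_countable_tau A;
       metrizable_tau A].
Proof.
case: n A => [|m] A // _ AL.
have h12 := i_ii AL.
have h31 := @iii_i R m A.
have h43 := iv_iii AL.
have h24 : countable (@Ln R m.+1 `\` A) -> metrizable_tau A.
  move/countable_injP => [idx hidx]; exact: (@ii_iv_aux R m A AL idx hidx).
tfae.
- exact: h12.
- by move=> h; apply: h43; apply: h24.
- by move=> h; apply: h24; apply: h12; apply: h31.
- by move=> h; apply: h31; apply: h43.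
Qed.
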